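(* Let $\mathcal X,\mathcal U$ be finite nonempty sets, $f:\mathcal X\times\mathcal U\to\mathcal X$ and $\ell_1,\ell_2:\mathcal X\to\mathbb R$. For $i=1,2$ let $V_{\mathrm{R}i}^*(x)=\max_{\pi\in\Pi}\max_{\tau\in\mathbb N}\ell_i(\xi_x^\pi(\tau))$, $\hat\ell(x)=\max\{\min\{\ell_1(x),V_{\mathrm{R}2}^*(x)\},\min\{V_{\mathrm{R}1}^*(x),\ell_2(x)\}\}$, $\tilde v_{\mathrm R}^*(x)=\max_{\mathbf u\in\mathbb U}\max_{\tau\in\mathbb N}\hat\ell(\xi_x^{\mathbf u}(\tau))$ and $$v_{\mathrm{RR}}^*(x)=\max_{\mathbf u\in\mathbb U}\min\Big\{\max_{\tau\in\mathbb N}\ell_1(\xi_x^{\mathbf u}(\tau)),\max_{\tau\in\mathbb N}\ell_2(\xi_x^{\mathbf u}(\tau))\Big\}.$$ Then $\tilde v_{\mathrm R}^*(x)=v_{\mathrm{RR}}^*(x)$ for every $x\in\mathcal X$.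
   Context: $\mathbb N=\{0,1,\dots\}$; $\Pi$ is the set of maps $\mathcal X\to\mathcal U$; $\mathbb U$ is the set of sequences $\mathbb N\to\mathcal U$. For $\pi\in\Pi$: $\xi_x^\pi(0)=x$, $\xi_x^\pi(t+1)=f(\xi_x^\pi(t),\pi(\xi_x^\pi(t)))$. For $\mathbf u\in\mathbb U$: $\xi_x^{\mathbf u}(0)=x$, $\xi_x^{\mathbf u}(t+1)=f(\xi_x^{\mathbf u}(t),\mathbf u(t))$. *)

(* Defs.v *)
From HB Require Import structures.
From mathcomp Require Import all_boot all_order all_algebra.
From mathcomp Require Import classical_sets reals.
Set Implicit Arguments. Unset Strict Implicit. Unset Printing Implicit Defensive.
Import Order.TTheory GRing.Theory Num.Theory.
Local Open Scope classical_set_scope.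
Local Open Scope ring_scope.

Section Defs.
Variables (R : realType) (X U : finType) (f : X -> U -> X).

Fixpoint traj_pol (pi : X -> U) (x : X) (t : nat) : X :=
  match t with
  | 0 => x
  | t'.+1 => let y := traj_pol pi x t' in f y (pi y)
  end.

Fixpoint traj_seq (u : nat -> U) (x : X) (t : nat) : X :=
  match t with
  | 0 => x
  | t'.+1 => f (traj_seq u x t') (u t')
  end.

(* max_{tau in N} g(tau), as a supremum (attained: g has finite range here) *)
Definition max_time (g : nat -> R) : R := sup (range g).

Definition VR (l : X -> R) (x : X) : R :=
  sup (range (fun pi : X -> U => max_time (fun t => l (traj_pol pi x t)))).

Definition lhat (l1 l2 : X -> R) (x : X) : R :=
  Num.max (Num.min (l1 x) (VR l2 x)) (Num.min (VR l1 x) (l2 x)).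

Definition vtildeR (l1 l2 : X -> R) (x : X) : R :=
  sup (range (fun u : nat -> U =>
    max_time (fun t => lhat l1 l2 (traj_seq u x t)))).

Definition vRR (l1 l2 : X -> R) (x : X) : R :=
  sup (range (fun u : nat -> U =>
    Num.min (max_time (fun t => l1 (traj_seq u x t)))
            (max_time (fun t => l2 (traj_seq u x t))))).
End Defs.

(* Main.v *)
Require Import Defs.
From mathcomp Require Import all_boot all_order all_algebra.
From mathcomp Require Import boolp classical_sets reals.
Set Implicit Arguments. Unset Strict Implicit. Unset Printing Implicit Defensive.
Import Order.TTheory GRing.Theory Num.Theory.
Local Open Scope classical_set_scope.
Local Open Scope ring_scope.

Section Aux.
Variable R : realType.

Lemma sup_range_le (T : Type) (t0 : T) (h : T -> R) (c : R) :
  (forall t, h t <= c) -> sup (range h) <= c.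
Proof. move=> H; apply: ge_sup; first by exists (h t0), t0. by move=> _ [t _ <-]. Qed.

Lemma le_sup_range (T : Type) (h : T -> R) (b : R) :
  (forall t, h t <= b) -> forall t, h t <= sup (range h).
Proof.
move=> H t; apply: ub_le_sup; last by exists t.
by exists b => _ [s _ <-].
Qed.

Lemma min_sup_le (T : Type) (t0 : T) (h : T -> R) (k c : R) :
  (forall t, Num.min (h t) k <= c) -> Num.min (sup (range h)) k <= c.
Proof.
move=> H; have [kc|ck] := leP k c.
  by rewrite ge_min kc orbT.
have hc : forall t, h t <= c.
  move=> t; have := H t; rewrite ge_min => /orP[//|kc]; by rewrite leNgt ck in kc.
by rewrite ge_min (sup_range_le t0 hc).
Qed.

Definition bnd (X : finType) (g : X -> R) := \sum_(y : X) `|g y|.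

Lemma le_bnd (X : finType) (g : X -> R) y : g y <= bnd g.
Proof.
apply: le_trans (ler_norm _) _; rewrite /bnd (bigD1 y) //=.
by rewrite lerDl sumr_ge0.
Qed.
End Aux.

Section Main.
Variables (R : realType) (X U : finType) (f : X -> U -> X).

Lemma traj_seq_shift (u : nat -> U) x t m :
  traj_seq f u x (t + m) = traj_seq f (fun k => u (t + k)%N) (traj_seq f u x t) m.
Proof. by elim: m => [|m IH]; rewrite ?addn0 // addnS /= IH. Qed.

Lemma traj_pol_shift (pi : X -> U) x t m :
  traj_pol f pi x (t + m) = traj_pol f pi (traj_pol f pi x t) m.
Proof. by elim: m => [|m IH]; rewrite ?addn0 // addnS /= IH. Qed.

Lemma traj_polS (pi : X -> U) x t :
  traj_pol f pi x t.+1 = f (traj_pol f pi x t) (pi (traj_pol f pi x t)).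
Proof. by []. Qed.

Lemma reach n : forall z (u : nat -> U), exists pi s, traj_pol f pi z s = traj_seq f u z n.
Proof.
elim: n => [|n IH] z u; first by exists (fun _ => u 0%N), 0%N.
rewrite -add1n traj_seq_shift /=.
set z1 := f z (u 0%N).
have [pi' [s Hs]] := IH z1 (fun k => u (1 + k)%N).
case: (pselect (exists k, (k <= s)%N /\ traj_pol f pi' z1 k = z)).
  move=> [k [ks Hk]]; exists pi', (s - k)%N.
  by rewrite -Hs -Hk -traj_pol_shift subnKC.
move=> Hn.
pose pi := fun w => if w == z then u 0%N else pi' w.
have E : forall k, (k <= s)%N -> traj_pol f pi z k.+1 = traj_pol f pi' z1 k.
  elim=> [|k IHk] ks; first by rewrite /= /pi eqxx.
  rewrite traj_polS IHk ?(ltnW ks) // /pi traj_polS.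
  case: eqP => [e|_] //; exfalso; apply: Hn; exists k; split => //; exact: ltnW.
by exists pi, s.+1; rewrite E.
Qed.

Definition Mt (l : X -> R) u x := max_time (fun t => l (traj_seq f u x t)).

Lemma Mt_ge (l : X -> R) u x t : l (traj_seq f u x t) <= Mt l u x.
Proof. rewrite /Mt /max_time; apply: (le_sup_range (b := bnd l)) => s; exact: le_bnd. Qed.

Lemma Mt_le (l : X -> R) u x : Mt l u x <= bnd l.
Proof. rewrite /Mt /max_time; apply: (sup_range_le 0%N) => t; exact: le_bnd. Qed.

Lemma VR_ge (l : X -> R) z pi s : l (traj_pol f pi z s) <= VR f l z.
Proof.
have h1 : l (traj_pol f pi z s) <= max_time (fun t => l (traj_pol f pi z t)).
  by rewrite /max_time; apply: (le_sup_range (b := bnd l)) => t; exact: le_bnd.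
apply: (le_trans h1); rewrite /VR.
apply: (@le_sup_range R _ (fun pi => max_time (fun t => l (traj_pol f pi z t))) (bnd l) _ pi).
move=> p; rewrite /max_time; apply: (sup_range_le 0%N) => t; exact: le_bnd.
Qed.

Variable u0 : U.

Lemma G1 (l l' : X -> R) (u : nat -> U) x tau :
  Num.min (l (traj_seq f u x tau)) (VR f l' (traj_seq f u x tau)) <=
  sup (range (fun u => Num.min (Mt l u x) (Mt l' u x))).
Proof.
set z := traj_seq f u x tau; rewrite minC; apply: (min_sup_le (fun _ => u0)) => pi.
apply: (min_sup_le 0%N) => s.
pose u' := fun k => if (k < tau)%N then u k else pi (traj_pol f pi z (k - tau)).
have E1 : forall k, (k <= tau)%N -> traj_seq f u' x k = traj_seq f u x k.
  elim=> [|k IH] kt //=; rewrite IH ?(ltnW kt) // /u' kt //.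
have E2 : forall m, traj_seq f u' x (tau + m) = traj_pol f pi z m.
  elim=> [|m IH]; first by rewrite addn0 E1.
  by rewrite addnS /= IH /u' ltnNge leq_addr /= addKn.
apply: le_trans (_ : Num.min (Mt l u' x) (Mt l' u' x) <= _).
  rewrite minC; apply: le_min2.
    by rewrite /z -(E1 tau) //; exact: Mt_ge.
  by rewrite -E2; exact: Mt_ge.
apply: (@le_sup_range R _ (fun u => Num.min (Mt l u x) (Mt l' u x)) (bnd l) _ u').
by move=> v; rewrite ge_min Mt_le.
Qed.

Lemma G2 (l l' : X -> R) (u : nat -> U) x t s : (t <= s)%N ->
  Num.min (l (traj_seq f u x t)) (l' (traj_seq f u x s)) <=
  Num.min (l (traj_seq f u x t)) (VR f l' (traj_seq f u x t)).
Proof.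
move=> ts; apply: le_min2 => //.
rewrite -(subnKC ts) traj_seq_shift.
have [pi [s' <-]] := reach (s - t) (traj_seq f u x t) (fun k => u (t + k)%N).
exact: VR_ge.
Qed.

End Main.

Theorem mainTheorem15 (R : realType) (X U : finType)
  (hX : (0 < #|X|)%N) (hU : (0 < #|U|)%N)
  (f : X -> U -> X) (l1 l2 : X -> R) :
  forall x : X, vtildeR f l1 l2 x = vRR f l1 l2 x.
Proof.
move=> x; have /card_gt0P [u0 _] := hU.
have sym : vRR f l2 l1 x = vRR f l1 l2 x.
  by rewrite /vRR; under eq_fun do rewrite minC.
apply/eqP; rewrite eq_le; apply/andP; split.
- apply: (sup_range_le (fun _ => u0)) => u.
  apply: (sup_range_le 0%N) => t.
  rewrite /lhat ge_max; apply/andP; split.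
    by have := G1 f u0 l1 l2 u x t; rewrite /Mt /vRR.
  by rewrite minC -sym; have := G1 f u0 l2 l1 u x t; rewrite /Mt /vRR.
- apply: (sup_range_le (fun _ => u0)) => u.
  apply: (min_sup_le 0%N) => t; rewrite minC.
  apply: (min_sup_le 0%N) => s; rewrite minC.
  have lhat_le : forall y, lhat f l1 l2 y <= bnd (lhat f l1 l2) by move=> y; exact: le_bnd.
  have Hv : forall k, lhat f l1 l2 (traj_seq f u x k) <= vtildeR f l1 l2 x.
    move=> k; apply: le_trans (_ : max_time (fun t => lhat f l1 l2 (traj_seq f u x t)) <= _).
      by rewrite /max_time; apply: (@le_sup_range R _ (fun t => lhat f l1 l2 (traj_seq f u x t)) (bnd (lhat f l1 l2)) _ k).
    apply: (@le_sup_range R _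
      (fun u => max_time (fun t => lhat f l1 l2 (traj_seq f u x t))) (bnd (lhat f l1 l2)) _ u).
    by move=> v; apply: (sup_range_le 0%N).
  have [ts|st] := leqP t s.
    apply: le_trans (G2 f l1 l2 u x ts) _; apply: le_trans (Hv t).
    by rewrite /lhat le_max lexx.
  rewrite minC; apply: le_trans (G2 f l2 l1 u x (ltnW st)) _; apply: le_trans (Hv s).
  by rewrite /lhat le_max minC lexx orbT.
Qed.
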